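(* Let $s>2$, let $\gamma$ be a fixed constant (the ratio of specific heats, typically $1<\gamma<3$), and let $\mathbb{T}=\mathbb{R}/2\pi\mathbb{Z}$. Consider the two-dimensional compressible gas dynamics system for $U=(\rho,u,v,h)$ on $\mathbb{T}^2$: \begin{align*} \rho_t +u\rho_x+v\rho_y+\rho(u_x+v_y)&=0, \\ u_t +uu_x+ vu_y+ h_x+ \tfrac{h}{\rho}\rho_x&=0, \\ v_t +uv_x+ vv_y+ h_y+ \tfrac{h}{\rho}\rho_y&=0, \\ h_t+uh_x+ vh_y+(\gamma -1) h(u_x+v_y)&=0. \end{align*} Then the data-to-solution map $U(0)\mapsto U(t)$ for this system is not uniformly continuous from any bounded subset of $(H^s(\mathbb{T}^2))^4$ into $C([0,T];(H^s(\mathbb{T}^2))^4)$.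
   Context: Here $\rho$ is the density, $(u,v)$ the velocity, and $h=p/\rho$ (with $p$ the pressure). Solutions are classical solutions taking values in a compact subset of the state space $G=\{(\rho,u,v,h):\rho>0,\ h>0\}$, where the system is symmetrizable hyperbolic; for $s>2$ the Cauchy problem is locally well posed in $(H^s(\mathbb{T}^2))^4$, and $T>0$ denotes a time of existence of the solutions considered. The Sobolev norm is $\|f\|_s^2=\langle \Lambda^s f,\Lambda^s f\rangle$ with $\Lambda^s=(1-\Delta)^{s/2}$ and $\langle\cdot,\cdot\rangle$ the $L^2(\mathbb{T}^2)$ inner product. *)

(* Defs.v *)
From Stdlib Require Import Reals Lra.
From Coquelicot Require Import Coquelicot.
Open Scope R_scope.

(** Functions on T^2 = (R/2piZ)^2 are represented as 2pi-periodic functions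
    R -> R -> R (arguments x, y). *)

(** Real/imaginary parts (up to sign) of the Fourier coefficient
    fhat(k) = (2pi)^-2 \int_{[0,2pi]^2} f(x,y) e^{-i(k1 x + k2 y)} dx dy. *)
Definition fourier_cos (f : R -> R -> R) (k1 k2 : Z) : R :=
  / (4 * PI ^ 2) *
  RInt (fun x => RInt (fun y => f x y * cos (IZR k1 * x + IZR k2 * y)) 0 (2 * PI))
       0 (2 * PI).

Definition fourier_sin (f : R -> R -> R) (k1 k2 : Z) : R :=
  / (4 * PI ^ 2) *
  RInt (fun x => RInt (fun y => f x y * sin (IZR k1 * x + IZR k2 * y)) 0 (2 * PI))
       0 (2 * PI).

Definition fourier_abs2 (f : R -> R -> R) (k1 k2 : Z) : R :=
  fourier_cos f k1 k2 ^ 2 + fourier_sin f k1 k2 ^ 2.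

(** Weighted term (1+|k|^2)^s |fhat(k)|^2, times (2pi)^2 so that the sum is
    <Lambda^s f, Lambda^s f> for the (unnormalised) L^2(T^2) inner product. *)
Definition sob_term (s : R) (f : R -> R -> R) (k1 k2 : Z) : R :=
  4 * PI ^ 2 * Rpower (1 + IZR k1 ^ 2 + IZR k2 ^ 2) s * fourier_abs2 f k1 k2.

Definition sob_partial (s : R) (f : R -> R -> R) (N : nat) : R :=
  sum_f_R0 (fun i =>
    sum_f_R0 (fun j =>
      sob_term s f (Z.of_nat i - Z.of_nat N)%Z (Z.of_nat j - Z.of_nat N)%Z)
    (2 * N)) (2 * N).

(** ||f||_s^2 in [0, +oo] (nondecreasing limit of the partial sums). *)
Definition sob2 (s : R) (f : R -> R -> R) : Rbar := Lim_seq (sob_partial s f).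

Definition in_Hs (s : R) (f : R -> R -> R) : Prop := is_finite (sob2 s f).

(** The H^s norm of f (meaningful when in_Hs s f). *)
Definition Hs_norm (s : R) (f : R -> R -> R) : R := sqrt (real (sob2 s f)).

Record flow : Type := Flow {
  f_rho : R -> R -> R -> R;
  f_u   : R -> R -> R -> R;
  f_v   : R -> R -> R -> R;
  f_h   : R -> R -> R -> R }.

Definition comp (i : nat) (U : flow) : R -> R -> R -> R :=
  match i with 0 => f_rho U | 1 => f_u U | 2 => f_v U | _ => f_h U end.

Definition Hs4_dist2 (s : R) (U : flow) (t : R) (W : flow) (t' : R) : R :=
  sqrt (real (sob2 s (fun x y => f_rho U t x y - f_rho W t' x y))
      + real (sob2 s (fun x y => f_u U t x y - f_u W t' x y))
      + real (sob2 s (fun x y => f_v U t x y - f_v W t' x y))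
      + real (sob2 s (fun x y => f_h U t x y - f_h W t' x y))).

Definition Hs4_dist (s : R) (U W : flow) (t : R) : R := Hs4_dist2 s U t W t.

Definition Hs4_norm (s : R) (U : flow) (t : R) : R :=
  sqrt (real (sob2 s (f_rho U t)) + real (sob2 s (f_u U t))
      + real (sob2 s (f_v U t)) + real (sob2 s (f_h U t))).

Definition dt (f : R -> R -> R -> R) t x y := Derive (fun t' => f t' x y) t.
Definition dx (f : R -> R -> R -> R) t x y := Derive (fun x' => f t x' y) x.
Definition dy (f : R -> R -> R -> R) t x y := Derive (fun y' => f t x y') y.

Definition partials_exist (f : R -> R -> R -> R) t x y : Prop :=
  ex_derive (fun t' => f t' x y) t /\ ex_derive (fun x' => f t x' y) x /\
  ex_derive (fun y' => f t x y') y.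

Definition gas_eqs (gamma : R) (U : flow) t x y : Prop :=
  let rho := f_rho U in let u := f_u U in let v := f_v U in let h := f_h U in
  dt rho t x y + u t x y * dx rho t x y + v t x y * dy rho t x y
    + rho t x y * (dx u t x y + dy v t x y) = 0 /\
  dt u t x y + u t x y * dx u t x y + v t x y * dy u t x y + dx h t x y
    + h t x y / rho t x y * dx rho t x y = 0 /\
  dt v t x y + u t x y * dx v t x y + v t x y * dy v t x y + dy h t x y
    + h t x y / rho t x y * dy rho t x y = 0 /\
  dt h t x y + u t x y * dx h t x y + v t x y * dy h t x y
    + (gamma - 1) * h t x y * (dx u t x y + dy v t x y) = 0.

(** U is a classical solution on [0,T] of the system, periodic in (x,y),
    taking values in a compact subset of G = {rho > 0, h > 0}, with
    U in C([0,T]; (H^s(T^2))^4). *)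
Definition is_solution (gamma s T : R) (U : flow) : Prop :=
  (forall i t x y, (i < 4)%nat ->
     comp i U t (x + 2 * PI) y = comp i U t x y /\
     comp i U t x (y + 2 * PI) = comp i U t x y) /\
  (* values in a compact subset of G *)
  (exists c, 0 < c /\ forall t x y, 0 <= t <= T ->
     c <= f_rho U t x y <= / c /\ c <= f_h U t x y <= / c /\
     Rabs (f_u U t x y) <= / c /\ Rabs (f_v U t x y) <= / c) /\
  (forall i t x y, (i < 4)%nat -> 0 <= t <= T ->
     continuous (fun p : R * R => comp i U t (fst p) (snd p)) (x, y)) /\
  (forall i t, (i < 4)%nat -> 0 <= t <= T -> in_Hs s (comp i U t)) /\
  (forall t0, 0 <= t0 <= T -> forall eps, 0 < eps -> exists delta, 0 < delta /\
     forall t, 0 <= t <= T -> Rabs (t - t0) < delta -> Hs4_dist2 s U t U t0 < eps) /\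
  (forall t x y, 0 < t < T ->
     (forall i, (i < 4)%nat -> partials_exist (comp i U) t x y) /\
     gas_eqs gamma U t x y).

(* Main.v *)
Require Import Defs.
From Stdlib Require Import Reals Lra Lia FunctionalExtensionality.
From Coquelicot Require Import Coquelicot.
Open Scope R_scope.
Lemma sin_int (j : Z) : sin (IZR j * (2*PI)) = 0.
Proof. apply sin_eq_0_1. exists (2*j)%Z. rewrite mult_IZR. ring. Qed.
Lemma cos_int (j : Z) : cos (IZR j * (2*PI)) = 1.
Proof. replace (IZR j * (2*PI)) with (2 * (IZR j * PI)) by ring.
rewrite cos_2a_sin. rewrite sin_eq_0_1. ring. exists j. ring. Qed.
Lemma is_RInt_eq (f : R -> R) a b (l l' : R) : l = l' -> is_RInt f a b l -> is_RInt f a b l'.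
Proof. intros ->; auto. Qed.
Definition Iz (j : Z) : R := if Z.eq_dec j 0 then 2*PI else 0.
Lemma RInt_cos (j : Z) : is_RInt (fun y => cos (IZR j * y)) 0 (2*PI) (Iz j).
Proof.
unfold Iz; destruct (Z.eq_dec j 0) as [->|Hj].
- apply (is_RInt_eq _ _ _ (minus (2*PI) 0)).
  { unfold minus, plus, opp; simpl. ring. }
  apply (is_RInt_derive (fun y => y)).
  + intros. auto_derive; auto. rewrite Rmult_0_l, cos_0. ring.
  + intros. apply (@ex_derive_continuous R_AbsRing R_NormedModule). auto_derive; auto.
- assert (IZR j <> 0) by (apply not_0_IZR; auto).
  apply (is_RInt_eq _ _ _ (minus (sin (IZR j * (2*PI)) / IZR j) (sin (IZR j * 0) / IZR j))).
  { rewrite sin_int, Rmult_0_r, sin_0; unfold minus, plus, opp; simpl. field; auto. }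
  apply (is_RInt_derive (fun y => sin (IZR j * y) / IZR j)).
  + intros. auto_derive; auto. field; auto.
  + intros. apply (@ex_derive_continuous R_AbsRing R_NormedModule). auto_derive; auto.
Qed.
Lemma RInt_sin (j : Z) : is_RInt (fun y => sin (IZR j * y)) 0 (2*PI) 0.
Proof.
destruct (Z.eq_dec j 0) as [->|Hj].
- apply (is_RInt_eq _ _ _ (minus (0:R) 0)).
  { unfold minus, plus, opp; simpl. ring. }
  apply (is_RInt_derive (fun y => 0)).
  + intros. auto_derive; auto. rewrite Rmult_0_l, sin_0. ring.
  + intros. apply (@ex_derive_continuous R_AbsRing R_NormedModule). auto_derive; auto.
- assert (IZR j <> 0) by (apply not_0_IZR; auto).
  apply (is_RInt_eq _ _ _ (minus (- cos (IZR j * (2*PI)) / IZR j) (- cos (IZR j * 0) / IZR j))).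
  { rewrite cos_int, Rmult_0_r, cos_0; unfold minus, plus, opp; simpl. field; auto. }
  apply (is_RInt_derive (fun y => - cos (IZR j * y) / IZR j)).
  + intros. auto_derive; auto. field; auto.
  + intros. apply (@ex_derive_continuous R_AbsRing R_NormedModule). auto_derive; auto.
Qed.
Lemma is_RInt_plusR (f g : R -> R) a b If Ig : is_RInt f a b If -> is_RInt g a b Ig ->
  is_RInt (fun y => f y + g y) a b (If + Ig).
Proof. intros. exact (is_RInt_plus _ _ _ _ _ _ H H0). Qed.
Lemma is_RInt_scalR (f : R -> R) a b k If : is_RInt f a b If ->
  is_RInt (fun y => k * f y) a b (k * If).
Proof. intros. exact (is_RInt_scal _ _ _ _ _ H). Qed.

Lemma is_RInt_extR (f g : R -> R) a b (l : R) : (forall x, f x = g x) -> is_RInt f a b l -> is_RInt g a b l.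
Proof. intros H. apply is_RInt_ext. intros; apply H. Qed.

Definition Fm (m : Z) (c al be : R) (y : R) := c + al * cos (IZR m * y) + be * sin (IZR m * y).
Definition Pc m c al k := c * Iz k + al / 2 * (Iz (m + k) + Iz (m - k)).
Definition Ps m be k := be / 2 * (Iz (m - k) - Iz (m + k)).

Lemma RInt_Pc m c al be k :
  is_RInt (fun y => Fm m c al be y * cos (IZR k * y)) 0 (2*PI) (Pc m c al k).
Proof.
  unfold Pc.
  apply (is_RInt_eq _ _ _ (c * Iz k + al / 2 * (Iz (m + k) + Iz (m - k)) + be / 2 * (0 + 0))).
  { ring. }
  eapply is_RInt_extR.
  2:{ apply is_RInt_plusR. apply is_RInt_plusR. apply is_RInt_scalR. apply RInt_cos.
      apply is_RInt_scalR. apply is_RInt_plusR; apply RInt_cos.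
      apply is_RInt_scalR. apply is_RInt_plusR; [apply (RInt_sin (m+k)) | apply (RInt_sin (m-k))]. }
  intros y. unfold Fm. rewrite plus_IZR, minus_IZR.
  replace ((IZR m + IZR k) * y) with (IZR m * y + IZR k * y) by ring.
  replace ((IZR m - IZR k) * y) with (IZR m * y - IZR k * y) by ring.
  rewrite cos_plus, cos_minus, sin_plus, sin_minus. field.
Qed.

Lemma RInt_Ps m c al be k :
  is_RInt (fun y => Fm m c al be y * sin (IZR k * y)) 0 (2*PI) (Ps m be k).
Proof.
  unfold Ps.
  apply (is_RInt_eq _ _ _ (c * 0 + al / 2 * (0 + 0) + be / 2 * (Iz (m - k) + - 1 * Iz (m + k)))).
  { ring. }
  eapply is_RInt_extR.
  2:{ apply is_RInt_plusR. apply is_RInt_plusR. apply is_RInt_scalR. apply (RInt_sin k).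
      apply is_RInt_scalR. apply is_RInt_plusR; [apply (RInt_sin (k+m)) | apply (RInt_sin (k-m))].
      apply is_RInt_scalR. apply is_RInt_plusR. apply (RInt_cos (m-k)). apply is_RInt_scalR. apply (RInt_cos (m+k)). }
  intros y. cbv beta. unfold Fm. rewrite !plus_IZR, !minus_IZR.
  replace ((IZR m + IZR k) * y) with (IZR m * y + IZR k * y) by ring.
  replace ((IZR m - IZR k) * y) with (IZR m * y - IZR k * y) by ring.
  replace ((IZR k + IZR m) * y) with (IZR m * y + IZR k * y) by ring.
  replace ((IZR k - IZR m) * y) with (IZR k * y - IZR m * y) by ring.
  rewrite cos_plus, cos_minus, !sin_plus, !sin_minus. field.
Qed.

Lemma RInt_extR (f g : R -> R) a b : (forall x, f x = g x) -> RInt f a b = RInt g a b.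
Proof. intros H. apply RInt_ext. intros; apply H. Qed.

Lemma fc_Fm m c al be k1 k2 :
  fourier_cos (fun x y => Fm m c al be y) k1 k2 = / (4*PI^2) * (Pc m c al k2 * Iz k1).
Proof.
  unfold fourier_cos. f_equal.
  rewrite (RInt_extR _ (fun x => Pc m c al k2 * cos (IZR k1 * x) + (- Ps m be k2) * sin (IZR k1 * x))).
  - apply is_RInt_unique.
    apply (is_RInt_eq _ _ _ (Pc m c al k2 * Iz k1 + (- Ps m be k2) * 0)). { ring. }
    apply is_RInt_plusR; apply is_RInt_scalR; [apply (RInt_cos k1) | apply (RInt_sin k1)].
  - intros x. apply is_RInt_unique.
    apply (is_RInt_eq _ _ _ (cos (IZR k1 * x) * Pc m c al k2 + (- sin (IZR k1 * x)) * Ps m be k2)). { ring. }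
    eapply is_RInt_extR.
    2:{ apply is_RInt_plusR; apply is_RInt_scalR; [apply (RInt_Pc m c al be k2) | apply (RInt_Ps m c al be k2)]. }
    intros y. cbv beta. rewrite cos_plus. ring.
Qed.

Lemma fs_Fm m c al be k1 k2 :
  fourier_sin (fun x y => Fm m c al be y) k1 k2 = / (4*PI^2) * (Ps m be k2 * Iz k1).
Proof.
  unfold fourier_sin. f_equal.
  rewrite (RInt_extR _ (fun x => Pc m c al k2 * sin (IZR k1 * x) + Ps m be k2 * cos (IZR k1 * x))).
  - apply is_RInt_unique.
    apply (is_RInt_eq _ _ _ (Pc m c al k2 * 0 + Ps m be k2 * Iz k1)). { ring. }
    apply is_RInt_plusR; apply is_RInt_scalR; [apply (RInt_sin k1) | apply (RInt_cos k1)].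
  - intros x. apply is_RInt_unique.
    apply (is_RInt_eq _ _ _ (sin (IZR k1 * x) * Pc m c al k2 + cos (IZR k1 * x) * Ps m be k2)). { ring. }
    eapply is_RInt_extR.
    2:{ apply is_RInt_plusR; apply is_RInt_scalR; [apply (RInt_Pc m c al be k2) | apply (RInt_Ps m c al be k2)]. }
    intros y. cbv beta. rewrite sin_plus. ring.
Qed.

Definition Rm s m := Rpower (1 + IZR m ^ 2) s.
Definition STm s m c al be k1 k2 :=
  if Z.eq_dec k1 0 then
    (if Z.eq_dec k2 0 then 4*PI^2*c^2 else 0)
    + (if Z.eq_dec k2 m then PI^2 * Rm s m * (al^2+be^2) else 0)
    + (if Z.eq_dec k2 (-m) then PI^2 * Rm s m * (al^2+be^2) else 0)
  else 0.

Lemma Rpower_base1 s : Rpower 1 s = 1.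
Proof. unfold Rpower. rewrite ln_1, Rmult_0_r. apply exp_0. Qed.

Lemma sob_term_Fm s m c al be k1 k2 : (1 <= m)%Z ->
  sob_term s (fun x y => Fm m c al be y) k1 k2 = STm s m c al be k1 k2.
Proof.
  intros Hm. unfold sob_term, fourier_abs2, STm. rewrite fc_Fm, fs_Fm.
  unfold Pc, Ps, Iz.
  assert (PI <> 0) by apply PI_neq0.
  destruct (Z.eq_dec k1 0) as [->|h1]; [|field; auto].
  destruct (Z.eq_dec k2 0) as [->|h2].
  { repeat match goal with |- context[Z.eq_dec ?a ?b] => destruct (Z.eq_dec a b); try lia end.
    replace (1 + IZR 0 ^ 2 + IZR 0 ^ 2) with 1 by (simpl; ring). rewrite Rpower_base1. field; auto. }
  destruct (Z.eq_dec k2 m) as [->|h3].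
  { repeat match goal with |- context[Z.eq_dec ?a ?b] => destruct (Z.eq_dec a b); try lia end.
    unfold Rm. replace (1 + IZR 0 ^ 2 + IZR m ^ 2) with (1 + IZR m ^ 2) by (simpl; ring). field; auto. }
  destruct (Z.eq_dec k2 (-m)) as [->|h4].
  { repeat match goal with |- context[Z.eq_dec ?a ?b] => destruct (Z.eq_dec a b); try lia end.
    unfold Rm. rewrite opp_IZR. replace (1 + IZR 0 ^ 2 + (- IZR m) ^ 2) with (1 + IZR m ^ 2) by (simpl; ring). field; auto. }
  repeat match goal with |- context[Z.eq_dec ?a ?b] => destruct (Z.eq_dec a b); try lia end.
  field; auto.
Qed.

Lemma sum_zero (g : nat -> R) n : (forall i, (i <= n)%nat -> g i = 0) -> sum_f_R0 g n = 0.
Proof. intros H. induction n; simpl. apply H; lia. rewrite IHn. rewrite (H (S n)) by lia. ring. intros; apply H; lia. Qed.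

Lemma sum_single (g : nat -> R) p n : (p <= n)%nat -> (forall i, i <> p -> g i = 0) ->
  sum_f_R0 g n = g p.
Proof.
  intros Hp H. induction n.
  - assert (p = 0%nat) by lia. subst. reflexivity.
  - simpl. destruct (Nat.eq_dec p (S n)) as [->|hne].
    + rewrite (sum_zero g n); [ring|]. intros; apply H; lia.
    + rewrite IHn by lia. rewrite (H (S n)) by lia. ring.
Qed.

Lemma single_Z (a : R) N K : (0 <= Z.of_nat N + K <= 2 * Z.of_nat N)%Z ->
  sum_f_R0 (fun j => if Z.eq_dec (Z.of_nat j - Z.of_nat N) K then a else 0) (2*N) = a.
Proof.
  intros HK. rewrite (sum_single _ (Z.to_nat (Z.of_nat N + K))).
  - destruct (Z.eq_dec _ K); [reflexivity | lia].
  - lia.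
  - intros i hi. destruct (Z.eq_dec _ K); [lia | reflexivity].
Qed.

Lemma sob_partial_Fm s m c al be N : (1 <= m)%Z -> (Z.to_nat m <= N)%nat ->
  sob_partial s (fun x y => Fm m c al be y) N = 4*PI^2*c^2 + 2 * (PI^2 * Rm s m * (al^2+be^2)).
Proof.
  intros Hm HN. unfold sob_partial.
  rewrite (sum_single _ N) by (lia || (intros i hi; apply sum_zero; intros j _;
     rewrite sob_term_Fm by lia; unfold STm; destruct (Z.eq_dec _ 0); [lia | reflexivity])).
  rewrite (sum_eq _ (fun j => ((if Z.eq_dec (Z.of_nat j - Z.of_nat N) 0 then 4*PI^2*c^2 else 0)
    + (if Z.eq_dec (Z.of_nat j - Z.of_nat N) m then PI^2 * Rm s m * (al^2+be^2) else 0))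
    + (if Z.eq_dec (Z.of_nat j - Z.of_nat N) (-m) then PI^2 * Rm s m * (al^2+be^2) else 0))).
  - rewrite !sum_plus, !single_Z by lia. ring.
  - intros j _. rewrite sob_term_Fm by lia. unfold STm.
    destruct (Z.eq_dec _ 0); [reflexivity | lia].
Qed.

Lemma sob2_Fm s m c al be : (1 <= m)%Z ->
  sob2 s (fun x y => Fm m c al be y) = Finite (4*PI^2*c^2 + 2 * (PI^2 * Rm s m * (al^2+be^2))).
Proof.
  intros Hm. unfold sob2.
  rewrite (Lim_seq_ext_loc _ (fun _ => 4*PI^2*c^2 + 2 * (PI^2 * Rm s m * (al^2+be^2)))).
  - apply Lim_seq_const.
  - exists (Z.to_nat m). intros N HN. apply sob_partial_Fm; auto.
Qed.

Definition V s m c al be := 4*PI^2*c^2 + 2 * (PI^2 * Rm s m * (al^2+be^2)).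

Lemma sob2_eq s f m c al be : (1 <= m)%Z -> (forall x y, f x y = Fm m c al be y) ->
  sob2 s f = Finite (V s m c al be).
Proof.
  intros Hm H. replace f with (fun x y : R => Fm m c al be y).
  apply sob2_Fm; auto.
  apply functional_extensionality; intro x; apply functional_extensionality; intro y. auto.
Qed.

Definition G (A : R) (m : Z) (w : R) : flow :=
  Flow (fun t x y => 1) (fun t x y => A * sin (IZR m * y - w * t))
       (fun t x y => w / IZR m) (fun t x y => 1).

Ltac sobrw := match goal with |- context[sob2 ?s ?f] =>
  let c := fresh in let al := fresh in let be := fresh in
  erewrite (sob2_eq s f _ ?[c] ?[al] ?[be]) end.

Lemma dist2_G s A m w w' t t' : (1 <= m)%Z ->
  Hs4_dist2 s (G A m w) t (G A m w') t' =
  sqrt (V s m 0 0 0 + V s m 0 (- A * sin (w*t) + A * sin (w'*t')) (A * cos (w*t) - A * cos (w'*t'))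
        + V s m (w / IZR m - w' / IZR m) 0 0 + V s m 0 0 0).
Proof.
  intros Hm. unfold Hs4_dist2. simpl.
  rewrite (sob2_eq s (fun _ _ : R => 1 - 1) m 0 0 0).
  rewrite (sob2_eq s (fun _ y : R =>
        A * sin (IZR m * y - w * t) - A * sin (IZR m * y - w' * t')) m 0 (- A * sin (w*t) + A * sin (w'*t')) (A * cos (w*t) - A * cos (w'*t'))).
  rewrite (sob2_eq s (fun _ _ : R => w / IZR m - w' / IZR m) m (w / IZR m - w' / IZR m) 0 0).
  reflexivity.
  all: auto; intros x y; unfold Fm; rewrite ?sin_minus; ring.
Qed.

Lemma norm_G s A m w t : (1 <= m)%Z ->
  Hs4_norm s (G A m w) t =
  sqrt (V s m 1 0 0 + V s m 0 (- A * sin (w*t)) (A * cos (w*t))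
        + V s m (w / IZR m) 0 0 + V s m 1 0 0).
Proof.
  intros Hm. unfold Hs4_norm. simpl.
  rewrite (sob2_eq s (fun _ _ : R => 1) m 1 0 0).
  rewrite (sob2_eq s (fun _ y : R => A * sin (IZR m * y - w * t)) m 0 (- A * sin (w*t)) (A * cos (w*t))).
  rewrite (sob2_eq s (fun _ _ : R => w / IZR m) m (w / IZR m) 0 0).
  reflexivity.
  all: auto; intros x y; unfold Fm; rewrite ?sin_minus; ring.
Qed.

Lemma sin2_le x : sin x ^ 2 <= x ^ 2.
Proof.
  assert (H : forall x, 0 < x -> sin x ^ 2 <= x ^ 2).
  { intros z Hz. destruct (Rle_lt_dec 1 z).
    - pose proof (SIN_bound z). nra.
    - pose proof (sin_lt_x z Hz). assert (0 < sin z) by (apply sin_gt_0; [lra | pose proof PI2_1; lra]). nra. }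
  destruct (Rtotal_order x 0) as [h|[h|h]].
  - replace (sin x ^ 2) with (sin (-x) ^ 2) by (rewrite sin_neg; ring).
    replace (x^2) with ((-x)^2) by ring. apply H; lra.
  - subst. rewrite sin_0. lra.
  - apply H; lra.
Qed.

Lemma V0 s m : V s m 0 0 0 = 0.
Proof. unfold V. ring. Qed.

Lemma Derive_R (f : R -> R) x (l : R) : is_derive f x l -> Derive f x = l.
Proof. apply is_derive_unique. Qed.

Lemma is_solution_G gamma s A m w : (1 <= m)%Z -> 0 <= w <= 1 -> Rm s m * A ^ 2 = 1 ->
  is_solution gamma s PI (G A m w).
Proof.
  intros Hm Hw HA.
  assert (HM : 1 <= IZR m) by (apply IZR_le; lia).
  unfold is_solution. split; [|split; [|split; [|split; [|split]]]].
  - intros i t x y Hi. destruct i as [|[|[|i]]]; simpl; split; try reflexivity.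
    replace (IZR m * (y + 2 * PI) - w * t) with ((IZR m * y - w * t) + IZR m * (2 * PI)) by ring.
    rewrite sin_plus, sin_int, cos_int. ring.
  - exists (/ (Rabs A + 2)). assert (0 <= Rabs A) by apply Rabs_pos.
    split. apply Rinv_0_lt_compat; lra.
    intros t x y Ht. simpl. rewrite Rinv_inv.
    assert (/ (Rabs A + 2) <= 1).
    { rewrite <- Rinv_1. apply Rinv_le_contravar; lra. }
    split; [lra|split; [lra|split]].
    + rewrite Rabs_mult. pose proof (SIN_bound (IZR m * y - w * t)).
      assert (Rabs (sin (IZR m * y - w * t)) <= 1) by (apply Rabs_le; lra). nra.
    + rewrite Rabs_pos_eq. apply Rle_trans with 1; [|lra].
      unfold Rdiv. apply Rle_trans with (1 * / 1); [|lra]. apply Rmult_le_compat; try lra.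
      left; apply Rinv_0_lt_compat; lra. apply Rinv_le_contravar; lra.
      unfold Rdiv. apply Rmult_le_pos; [lra|]. left; apply Rinv_0_lt_compat; lra.
  - intros i t x y Hi Ht. destruct i as [|[|[|i]]]; simpl; try apply continuous_const.
    apply (continuous_comp (@snd R R) (fun y => A * sin (IZR m * y - w * t))).
    apply continuous_snd.
    apply (@ex_derive_continuous R_AbsRing R_NormedModule). auto_derive; auto.
  - intros i t Hi Ht. unfold in_Hs. destruct i as [|[|[|i]]]; simpl.
    + rewrite (sob2_eq s _ m 1 0 0); auto. reflexivity. intros; unfold Fm; ring.
    + rewrite (sob2_eq s _ m 0 (- A * sin (w*t)) (A * cos (w*t))); auto. reflexivity.
      intros; unfold Fm; rewrite sin_minus; ring.
    + rewrite (sob2_eq s _ m (w / IZR m) 0 0); auto. reflexivity. intros; unfold Fm; ring.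
    + rewrite (sob2_eq s _ m 1 0 0); auto. reflexivity. intros; unfold Fm; ring.
  - intros t0 Ht0 eps Heps. exists (eps / 8). split; [lra|].
    intros t Ht Hd. rewrite dist2_G by auto.
    replace (w / IZR m - w / IZR m) with 0 by ring. rewrite !V0.
    set (d := w * t - w * t0).
    assert (E : V s m 0 (- A * sin (w * t) + A * sin (w * t0)) (A * cos (w * t) - A * cos (w * t0))
               = 8 * PI^2 * sin (d/2) ^ 2).
    { unfold V. 
      replace ((- A * sin (w * t) + A * sin (w * t0)) ^ 2 + (A * cos (w * t) - A * cos (w * t0)) ^ 2)
        with (A^2 * (2 - 2 * cos d)).
      - replace d with (2 * (d/2)) at 1 by field. rewrite cos_2a_sin.
        replace (2 * (PI ^ 2 * Rm s m * (A ^ 2 * (2 - 2 * (1 - 2 * sin (d / 2) * sin (d / 2))))))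
          with (8 * PI^2 * sin (d/2) ^ 2 * (Rm s m * A^2)) by ring. rewrite HA. ring.
      - unfold d. rewrite cos_minus.
        pose proof (sin2_cos2 (w*t)). pose proof (sin2_cos2 (w*t0)). unfold Rsqr in *. nra. }
    rewrite E.
    apply Rle_lt_trans with (sqrt ((8 * (t - t0)) ^ 2)).
    + apply sqrt_le_1_alt. pose proof (sin2_le (d/2)).
      assert (d ^ 2 <= (t - t0) ^ 2).
      { unfold d. replace (w * t - w * t0) with (w * (t - t0)) by ring.
        rewrite Rpow_mult_distr. pose proof (pow2_ge_0 (t - t0)). assert (w^2 <= 1) by nra. nra. }
      pose proof PI_RGT_0. pose proof PI_4. 
      assert (0 <= sin (d/2) ^ 2) by nra.
      replace ((d/2)^2) with (d^2/4) in H by field.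
      assert (PI^2 <= 16) by nra.
      assert (sin (d/2) ^ 2 <= (t - t0)^2 / 4) by lra.
      pose proof (pow2_ge_0 (t - t0)).
      assert (PI^2 * sin (d/2) ^ 2 <= 16 * ((t - t0)^2 / 4)).
      { apply Rmult_le_compat; try lra. apply pow2_ge_0. }
      replace ((8 * (t - t0)) ^ 2) with (64 * (t - t0)^2) by ring. lra.
    + rewrite <- pow2_abs, sqrt_pow2 by apply Rabs_pos.
      rewrite Rabs_mult, (Rabs_pos_eq 8) by lra. lra.
  - intros t x y Ht. split.
    + intros i Hi. destruct i as [|[|[|i]]]; simpl; unfold partials_exist;
      repeat split; try apply ex_derive_const; auto_derive; auto.
    + unfold gas_eqs, dt, dx, dy; simpl.
      assert (E1 : Derive (fun t' => A * sin (IZR m * y - w * t')) t = - A * w * cos (IZR m * y - w * t)).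
      { apply Derive_R. auto_derive. auto. unfold Rminus. ring. }
      assert (E2 : Derive (fun y' => A * sin (IZR m * y' - w * t)) y = A * IZR m * cos (IZR m * y - w * t)).
      { apply Derive_R. auto_derive. auto. unfold Rminus. ring. }
      rewrite E1, E2.
      rewrite !Derive_const.
      repeat split; field; lra.
Qed.

Lemma lim_inv_S : is_lim_seq (fun n => / INR (S n)) 0.
Proof.
  replace (Finite 0) with (Rbar_inv p_infty) by reflexivity.
  apply is_lim_seq_inv; [|discriminate].
  apply (is_lim_seq_incr_1 INR p_infty). apply is_lim_seq_INR.
Qed.

Theorem theorem1 (gamma s : R) (hgamma : 1 < gamma) (hs : 2 < s) :
  exists T : R, 0 < T /\
  exists (U W : nat -> flow) (M eps : R), 0 < eps /\
    (forall n, is_solution gamma s T (U n) /\ is_solution gamma s T (W n)) /\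
    (forall n t, 0 <= t <= T -> Hs4_norm s (U n) t <= M /\ Hs4_norm s (W n) t <= M) /\
    is_lim_seq (fun n => Hs4_dist s (U n) (W n) 0) 0 /\
    (forall n, exists t, 0 <= t <= T /\ eps <= Hs4_dist s (U n) (W n) t).
Proof.
  set (mm := fun n : nat => Z.of_nat (S n)).
  set (A := fun n => / sqrt (Rm s (mm n))).
  assert (Hm : forall n, (1 <= mm n)%Z) by (intros; unfold mm; lia).
  assert (HMR : forall n, IZR (mm n) = INR (S n)) by (intros; unfold mm; rewrite INR_IZR_INZ; reflexivity).
  assert (HM1 : forall n, 1 <= IZR (mm n)) by (intros; apply IZR_le; apply Hm).
  assert (HRpos : forall n, 0 < Rm s (mm n)) by (intros; unfold Rm, Rpower; apply exp_pos).
  assert (HA : forall n, Rm s (mm n) * A n ^ 2 = 1).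
  { intros n. unfold A. pose proof (HRpos n). pose proof (sqrt_lt_R0 _ H).
    pose proof (sqrt_sqrt (Rm s (mm n)) (Rlt_le _ _ H)).
    field_simplify; [|lra]. rewrite <- H1 at 1. field. lra. }
  assert (PI0 := PI_RGT_0). assert (PI4 := PI_4).
  exists PI. split; [lra|].
  exists (fun n => G (A n) (mm n) 0), (fun n => G (A n) (mm n) 1), 20, 1.
  split; [lra|split; [|split; [|split]]].
  - intros n. split; apply is_solution_G; auto; lra.
  - intros n t Ht. rewrite !norm_G by auto.
    assert (Hb : forall w, 0 <= w <= 1 ->
      V s (mm n) 1 0 0 + V s (mm n) 0 (- A n * sin (w * t)) (A n * cos (w * t)) +
      V s (mm n) (w / IZR (mm n)) 0 0 + V s (mm n) 1 0 0 <= 20 * 20).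
    { intros w Hw. unfold V.
      replace (PI ^ 2 * Rm s (mm n) * ((- A n * sin (w * t)) ^ 2 + (A n * cos (w * t)) ^ 2))
        with (PI ^ 2 * (Rm s (mm n) * A n ^ 2) * (sin (w*t) ^ 2 + cos (w*t) ^2)) by ring.
      rewrite HA. pose proof (sin2_cos2 (w*t)). unfold Rsqr in H.
      replace (sin (w * t) ^ 2 + cos (w * t) ^ 2) with 1 by (simpl; lra).
      assert (0 <= w / IZR (mm n) <= 1).
      { pose proof (HM1 n). split. apply Rmult_le_pos; [lra|]. left; apply Rinv_0_lt_compat; lra.
        apply Rle_trans with (1 / 1); [|lra]. unfold Rdiv. apply Rmult_le_compat; try lra.
        left; apply Rinv_0_lt_compat; lra. apply Rinv_le_contravar; lra. }
      assert (PI^2 <= 16) by nra.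
      assert ((w / IZR (mm n)) ^ 2 <= 1) by nra.
      assert (PI ^ 2 * (w / IZR (mm n)) ^ 2 <= 16) by nra.
      nra. }
    split; (rewrite <- (sqrt_square 20) by lra; apply sqrt_le_1_alt);
      (replace (20 * 20) with (20 * 20) by ring); apply Hb; lra.
  - unfold Hs4_dist.
    apply (is_lim_seq_ext (fun n => 2 * PI * / INR (S n))).
    + intros n. rewrite dist2_G by auto. rewrite !V0.
      rewrite ?Rmult_0_r, ?Rmult_0_l, sin_0, cos_0.
      rewrite <- HMR.
      replace (V s (mm n) 0 (- A n * 0 + A n * 0) (A n * 1 - A n * 1)) with 0 by (unfold V; ring).
      replace (0 + 0 + V s (mm n) (0 / IZR (mm n) - 1 / IZR (mm n)) 0 0 + 0)
        with ((2 * PI * / IZR (mm n)) ^ 2).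
      * rewrite sqrt_pow2; [reflexivity|]. pose proof (HM1 n).
        apply Rmult_le_pos; [lra|]. left; apply Rinv_0_lt_compat; lra.
      * unfold V. pose proof (HM1 n). field. lra.
    + replace (Finite 0) with (Rbar_mult (2 * PI) 0) by (simpl; f_equal; ring).
      apply is_lim_seq_scal_l. apply lim_inv_S.
  - intros n. exists PI. split; [lra|].
    unfold Hs4_dist. rewrite dist2_G by auto. rewrite !V0.
    rewrite Rmult_0_l, Rmult_1_l, sin_0, cos_0, sin_PI, cos_PI.
    apply Rle_trans with (sqrt 1); [rewrite sqrt_1; lra | apply sqrt_le_1_alt].
    unfold V.
    replace (PI ^ 2 * Rm s (mm n) * ((- A n * 0 + A n * 0) ^ 2 + (A n * 1 - A n * -1) ^ 2))
      with (4 * PI^2 * (Rm s (mm n) * A n ^ 2)) by ring.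
    rewrite HA. pose proof (pow2_ge_0 (0 / IZR (mm n) - 1 / IZR (mm n))).
    assert (1 <= PI) by (pose proof PI2_1; lra).
    nra.
Qed.
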